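(* Let $a,b$ be positive integers and let $A=(a_1,\ldots,a_n)$ be a sequence of positive integers such that $a_i\in\{a,a+1\}$ for every odd $i$ and $a_i\in\{b,b+1\}$ for every even $i$. (i) If $A=(P,a,R)$ where the displayed entry $a$ sits at an odd position and $P,R$ each have length at least $2$, then $$1+\frac{1}{a+2c^{(1)}_{a,a+1;b}}\le\frac{\langle P,a+1,R\rangle}{\langle P,a,R\rangle}\le 1+\frac{1}{a+2c^{(2)}_{a,a+1;b}}.$$ (ii) If $A=(P_1,b,R_1)$ where the displayed entry $b$ sits at an even position and $P_1,R_1$ each have length at least $2$, then $$1+\frac{1}{b+2c^{(1)}_{a;b,b+1}}\le\frac{\langle P_1,b+1,R_1\rangle}{\langle P_1,b,R_1\rangle}\le 1+\frac{1}{b+2c^{(2)}_{a;b,b+1}}.$$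
   Context: The continuant $\langle a_1,\ldots,a_n\rangle$ is defined by $\langle\,\rangle=1$, $\langle a_1\rangle=a_1$, $\langle a_1,\ldots,a_n\rangle=a_n\langle a_1,\ldots,a_{n-1}\rangle+\langle a_1,\ldots,a_{n-2}\rangle$; lists inside $\langle\cdot\rangle$ denote concatenation. $[x_1,\ldots,x_k]$ denotes the finite continued fraction $\cfrac{1}{x_1+\cfrac{1}{\ddots+\cfrac1{x_k}}}$. Define $c^{(1)}_{a,a+1;b}=[b,a+1,b]$, $c^{(2)}_{a,a+1;b}=[b+1,a]$, $c^{(1)}_{a;b,b+1}=[a,b+1,a]$, $c^{(2)}_{a;b,b+1}=[a+1,b]$. *)

(* Defs.v *)
From mathcomp Require Import all_boot all_order all_algebra.
Set Implicit Arguments. Unset Strict Implicit. Unset Printing Implicit Defensive.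
Import Order.TTheory GRing.Theory Num.Theory.

(* continuant of a reversed list: rcont [:: a_n; a_(n-1); ...; a_1] *)
Fixpoint rcont (s : seq nat) : nat :=
  match s with
  | [::] => 1
  | [:: x] => x
  | x :: ((y :: t) as s') => x * rcont s' + rcont t
  end.

Definition continuant (s : seq nat) : nat := rcont (rev s).

Fixpoint cfrac (s : seq rat) : rat :=
  match s with
  | [::] => 0%R
  | x :: t => (1 / (x + cfrac t))%R
  end.

Local Open Scope ring_scope.
Definition c1_aa1b (a b : nat) : rat := cfrac [:: b%:R; a.+1%:R; b%:R].
Definition c2_aa1b (a b : nat) : rat := cfrac [:: b.+1%:R; a%:R].
Definition c1_abb1 (a b : nat) : rat := cfrac [:: a%:R; b.+1%:R; a%:R].
Definition c2_abb1 (a b : nat) : rat := cfrac [:: a.+1%:R; b%:R].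

(* Main.v *)
Require Import Defs.
From mathcomp Require Import all_boot all_order all_algebra.
From mathcomp Require Import ring lra zify.
Lemma rconsC x s : s != [::] -> rcont (x :: s) = x * rcont s + rcont (behead s).
Proof. by case: s. Qed.
Lemma rcont_split U : U != [::] -> forall n S y, size S < n ->
  rcont (rcons S y ++ U) = rcont (rcons S y) * rcont U + rcont S * rcont (behead U).
Proof.
move=> hU; elim=> // n IH [|x S] y hS.
  by rewrite cat_rcons cat0s (@rconsC y U hU) mul1n.
rewrite rcons_cons cat_cons rconsC; last by case: (S).
rewrite IH; last by [].
case: S hS IH => [|z S3] hS IH.
  rewrite cat_rcons cat0s /=; ring.
rewrite rcons_cons cat_cons [behead (z :: _)]/= IH; last by apply: ltnW.
rewrite (@rconsC x (z :: rcons S3 y)) // (@rconsC x (z :: S3)) // [behead (z :: _)]/= [behead (z :: _)]/=.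
ring.
Qed.

Lemma rcont_last S z y : rcont (rcons (rcons S z) y) = y * rcont (rcons S z) + rcont S.
Proof.
have := @rcont_split [:: y] erefl (size S).+1 S z (ltnSn _).
by rewrite cats1 /= muln1 mulnC.
Qed.

Lemma rcont_pos s : all (fun x => 0 < x) s -> 0 < rcont s.
Proof.
elim: s => // x [|y t] IH; first by rewrite /= andbT.
move=> /andP[hx h]; rewrite rconsC //; have := IH h; nia.
Qed.

Import Order.TTheory GRing.Theory Num.Theory.
Local Open Scope ring_scope.
Definition F (s : seq nat) : seq rat := map (fun n : nat => n%:R) s.

Lemma cfF t s : cfrac (F (t :: s)) = 1 / (t%:R + cfrac (F s)).
Proof. by []. Qed.

Lemma fwd T t : all (fun x => 0 < x)%N (t :: T) ->
  (rcont T)%:R / (rcont (t :: T))%:R = cfrac (F (t :: T)).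
Proof.
elim: T t => [|t2 T IH] t.
  by rewrite /= addr0.
move=> /andP[ht h]; rewrite (@rconsC t (t2 :: T)) // [behead _]/= cfF.
have hX := @rcont_pos (t2 :: T) h.
rewrite -(IH t2 h) natrD natrM.
have hX' : (rcont (t2 :: T))%:R != 0 :> rat by rewrite pnatr_eq0 -lt0n.
have hD : (t%:R * (rcont (t2 :: T))%:R + (rcont T)%:R) != 0 :> rat.
  by rewrite -natrM -natrD pnatr_eq0 -lt0n; apply: ltn_addr; rewrite muln_gt0 ht.
by field; rewrite hX' hD.
Qed.

Lemma bwd R t : all (fun x => 0 < x)%N (t :: R) ->
  (rcont (rev R))%:R / (rcont (rev (t :: R)))%:R = cfrac (F (t :: R)).
Proof.
elim: R t => [|t2 T IH] t.
  by rewrite /= addr0.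
move=> /andP[ht h]; rewrite cfF.

rewrite -(IH t2 h) (rev_cons t) (rev_cons t2) rcont_last natrD natrM.
have hX1 : (0 < rcont (rcons (rev T) t2))%N by apply: rcont_pos; rewrite -rev_cons all_rev.
have hX' : (rcont (rcons (rev T) t2))%:R != 0 :> rat by rewrite pnatr_eq0 -lt0n.
have hD : (t%:R * (rcont (rcons (rev T) t2))%:R + (rcont (rev T))%:R) != 0 :> rat.
  by rewrite -natrM -natrD pnatr_eq0 -lt0n; apply: ltn_addr; rewrite muln_gt0 ht.
by field; rewrite hX' hD.
Qed.

Lemma cont_eq P y r R' : P != [::] ->
  continuant (P ++ y :: r :: R') =
  ((y * rcont (rev (r :: R')) + rcont (rev R')) * rcont (rev P) +
   rcont (rev (r :: R')) * rcont (behead (rev P)))%N.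
Proof.
move=> hP.
have hU : rev P != [::] by move: hP; apply: contra => /eqP h; rewrite -(revK P) h.
rewrite /continuant rev_cat (rev_cons y) (rev_cons r).
rewrite (@rcont_split (rev P) hU (size (rcons (rev R') r)).+1) //.
by rewrite rcont_last.
Qed.

Lemma ratio P x R : P != [::] -> R != [::] ->
  all (fun x => 0 < x)%N P -> all (fun x => 0 < x)%N R ->
  (continuant (P ++ x.+1 :: R))%:R / (continuant (P ++ x :: R))%:R
  = 1 + 1 / (x%:R + cfrac (F (rev P)) + cfrac (F R)) :> rat.
Proof.
case: R => [//|r R'] hP _ aP aR.
rewrite !cont_eq //.
rewrite -(@bwd R' r aR).
have aT : all (fun x => 0 < x)%N (rev P) by rewrite all_rev.
case hT: (rev P) aT => [|t T'] aT.
  by move: hP; rewrite -(revK P) hT.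
rewrite -(@fwd T' t aT) [behead _]/=.
have cT := @rcont_pos (t :: T') aT.
have cR : (0 < rcont (rev (r :: R')))%N by apply: rcont_pos; rewrite all_rev.
have hcT : (rcont (t :: T'))%:R != 0 :> rat by rewrite pnatr_eq0 -lt0n.
have hcR : (rcont (rev (r :: R')))%:R != 0 :> rat by rewrite pnatr_eq0 -lt0n.
set cTn := rcont (t :: T') in cT hcT *.
set cRn := rcont (rev (r :: R')) in cR hcR *.
set eR := rcont (rev R').
set dT := rcont T'.
have hdT : (0 < dT)%N by apply: rcont_pos; case/andP: aT.
have hD : (x%:R * cTn%:R + dT%:R) * cRn%:R + eR%:R * cTn%:R != 0 :> rat.
  rewrite -!natrM -!natrD -!natrM -!natrD pnatr_eq0 -lt0n; nia.
rewrite mulSn !natrD !natrM !natrD.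
by field; rewrite hD hcT hcR.
Qed.


Lemma invle (x y : rat) : 0 < x -> x <= y -> 1 / y <= 1 / x.
Proof.
move=> hx hxy; have hy : 0 < y by apply: lt_le_trans hxy.
by rewrite !div1r lef_pV2 ?posrE.
Qed.

Lemma inv0le (x : rat) : 0 <= x -> 0 <= 1 / x.
Proof. by move=> h; rewrite div1r invr_ge0. Qed.

Lemma cf_ge0 s : 0 <= cfrac (F s).
Proof.
elim: s => [|t s IH] //; rewrite cfF; apply: inv0le; apply: addr_ge0 => //.
Qed.

Lemma memb (x p : nat) : x \in [:: p; p.+1] -> p%:R <= x%:R :> rat /\ x%:R <= p%:R + 1 :> rat.
Proof.
rewrite !inE => /orP[]/eqP->; rewrite -?natr1; split; lra.
Qed.

Lemma bound p q s : (0 < p)%N -> (0 < q)%N -> (2 <= size s)%N ->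
  nth 0%N s 0 \in [:: p; p.+1] -> nth 0%N s 1 \in [:: q; q.+1] ->
  ((2 < size s)%N -> nth 0%N s 2 \in [:: p; p.+1]) ->
  cfrac [:: p.+1%:R; q%:R] <= cfrac (F s) <= cfrac [:: p%:R; q.+1%:R; p%:R].
Proof.
case: s => [|x1 [|x2 t]] // hp hq _ /= /memb [h1 h1'] /memb [h2 h2'] h3.
rewrite !addr0 -!natr1.
have hp' : 0 < p%:R :> rat by rewrite ltr0n.
have hq' : 0 < q%:R :> rat by rewrite ltr0n.
set c := cfrac (F t).
have hc0 : 0 <= c by apply: cf_ge0.
have hc1 : c <= 1 / p%:R.
  rewrite /c; case: t h3 {c hc0} => [|x3 t] h3 /=; first by rewrite div1r invr_ge0 ltW.
  have [h3a _] := @memb x3 p (h3 isT).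
  apply: invle => //; have := cf_ge0 t; lra.
have hu0 : 0 <= 1 / (x2%:R + c) by apply: inv0le; lra.
have hu1 : 1 / (x2%:R + c) <= 1 / q%:R by apply: invle => //; lra.
have hv0 : 0 <= 1 / p%:R :> rat by apply: inv0le; lra.
have hu2 : 1 / (q%:R + 1 + 1 / p%:R) <= 1 / (x2%:R + c) by apply: invle; lra.
have hw0 : 0 <= 1 / (q%:R + 1 + 1 / p%:R) :> rat by apply: inv0le; lra.
apply/andP; split; apply: invle; lra.
Qed.

Lemma oddsub n k : (k <= n)%N -> odd (n - k) = odd n (+) odd k.
Proof. by move=> h; rewrite -{2}(subnK h) oddD addbK. Qed.

Lemma G (p x : nat) (A P R : seq nat) : (0 < p)%N -> (0 < x)%N ->
  A = P ++ x :: R -> (2 <= size P)%N -> (2 <= size R)%N ->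
  (forall i, (i < size A)%N -> nth 0%N A i \in
     (if odd i == odd (size P) then [:: x; x.+1] else [:: p; p.+1])) ->
  1 + 1 / (x%:R + 2 * cfrac [:: p%:R; x.+1%:R; p%:R])
    <= (continuant (P ++ x.+1 :: R))%:R / (continuant (P ++ x :: R))%:R :> rat
  /\ (continuant (P ++ x.+1 :: R))%:R / (continuant (P ++ x :: R))%:R
    <= 1 + 1 / (x%:R + 2 * cfrac [:: p.+1%:R; x%:R]) :> rat.
Proof.
move=> hp hx hA sP sR hE.
have aA : all (fun y => 0 < y)%N A.
  apply/(all_nthP 0%N) => i hi; move: (hE i hi); case: ifP => _;
  by rewrite !inE => /orP[]/eqP->.
move: (aA); rewrite hA all_cat => /andP[aP /andP[_ aR]].
have szA : size A = (size P + (size R).+1)%N by rewrite hA size_cat.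
have hPk k : (k < size P)%N -> nth 0%N (rev P) k \in
   (if odd k then [:: x; x.+1] else [:: p; p.+1]).
  move=> hk; rewrite nth_rev // .
  have -> : nth 0%N P ((size P - k.+1)%N)%N = nth 0%N A ((size P - k.+1)%N)%N.
    by rewrite hA nth_cat ifT //; lia.
  have := hE ((size P - k.+1)%N)%N ltac:(lia).
  rewrite oddsub //= .
  by case: (odd (size P)); case: (odd k).
have hRk k : (k < size R)%N -> nth 0%N R k \in
   (if odd k then [:: x; x.+1] else [:: p; p.+1]).
  move=> hk.
  have -> : nth 0%N R k = nth 0%N A (size P + k.+1)%N.
    rewrite hA nth_cat ifF; last by lia.
    by rewrite addnC addnK.
  have := hE (size P + k.+1)%N ltac:(lia).
  rewrite oddD /=.
  by case: (odd (size P)); case: (odd k).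
have bP : cfrac [:: p.+1%:R; x%:R] <= cfrac (F (rev P)) <= cfrac [:: p%:R; x.+1%:R; p%:R].
  apply: bound => //; rewrite ?size_rev //.
  - by apply: (hPk 0%N); lia.
  - by apply: (hPk 1%N); lia.
  - by move=> h; apply: (hPk 2%N).
have bR : cfrac [:: p.+1%:R; x%:R] <= cfrac (F R) <= cfrac [:: p%:R; x.+1%:R; p%:R].
  apply: bound => //.
  - by apply: (hRk 0%N); lia.
  - by apply: (hRk 1%N); lia.
  - by move=> h; apply: (hRk 2%N).
have hP0 : P != [::] by case: (P) sP.
have hR0 : R != [::] by case: (R) sR.
rewrite ratio //.
have hc2 : 0 <= cfrac [:: p.+1%:R; x%:R] :> rat := cf_ge0 [:: p.+1; x].
have hx' : 0 < x%:R :> rat by rewrite ltr0n.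
move: bP bR => /andP[bP1 bP2] /andP[bR1 bR2].
split.
  suff : 1 / (x%:R + 2 * cfrac [:: p%:R; x.+1%:R; p%:R])
     <= 1 / (x%:R + cfrac (F (rev P)) + cfrac (F R)) by lra.
  apply: invle; lra.
suff : 1 / (x%:R + cfrac (F (rev P)) + cfrac (F R))
     <= 1 / (x%:R + 2 * cfrac [:: p.+1%:R; x%:R]) by lra.
apply: invle; lra.
Qed.

Theorem lemma11 (a b : nat) (A : seq nat) :
  (0 < a)%N -> (0 < b)%N ->
  (forall i, (i < size A)%N -> ~~ odd i -> nth 0%N A i \in [:: a; a.+1]) ->
  (forall i, (i < size A)%N -> odd i -> nth 0%N A i \in [:: b; b.+1]) ->
  (forall P R : seq nat, A = P ++ a :: R -> ~~ odd (size P) ->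
     (2 <= size P)%N -> (2 <= size R)%N ->
     1 + 1 / (a%:R + 2 * c1_aa1b a b)
       <= (continuant (P ++ a.+1 :: R))%:R / (continuant (P ++ a :: R))%:R :> rat
     /\ (continuant (P ++ a.+1 :: R))%:R / (continuant (P ++ a :: R))%:R
       <= 1 + 1 / (a%:R + 2 * c2_aa1b a b) :> rat)
  /\
  (forall P1 R1 : seq nat, A = P1 ++ b :: R1 -> odd (size P1) ->
     (2 <= size P1)%N -> (2 <= size R1)%N ->
     1 + 1 / (b%:R + 2 * c1_abb1 a b)
       <= (continuant (P1 ++ b.+1 :: R1))%:R / (continuant (P1 ++ b :: R1))%:R :> rat
     /\ (continuant (P1 ++ b.+1 :: R1))%:R / (continuant (P1 ++ b :: R1))%:R
       <= 1 + 1 / (b%:R + 2 * c2_abb1 a b) :> rat).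
Proof.
move=> ha hb hodd hev; split.
- move=> P R hA hP sP sR.
  apply: (@G b a A P R) => // i hi.
  rewrite (negbTE hP); case: ifP => h.
    by apply: hodd => //; move: h; case: (odd i).
  by apply: hev => //; move: h; case: (odd i).
- move=> P R hA hP sP sR.
  apply: (@G a b A P R) => // i hi.
  rewrite hP; case: ifP => h.
    by apply: hev => //; move: h; case: (odd i).
  by apply: hodd => //; move: h; case: (odd i).
Qed.
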